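(* Let $G$ be a finite simple graph having a Hamiltonian path $P=x_1x_2\dots x_n$ such that $G$ has no two secant edges with respect to $P$. Then $\chi(G)\le 3$.
   Context: Edges of $G$ are secant with respect to $P$ if they are secant with respect to the enumeration $x_1x_2\dots x_n$ induced by $P$: an edge $x_ix_j$ is a jump if $|i-j|>1$, and two jumps $x_lx_m$, $x_px_q$ with $l<m$, $p<q$ are secant if $l<p<m<q$ or $p<l<q<m$. *)

(* Defs.v *)
From mathcomp Require Import all_boot.
Set Implicit Arguments. Unset Strict Implicit. Unset Printing Implicit Defensive.

Definition simple_graph (T : finType) (e : rel T) : Prop :=
  symmetric e /\ irreflexive e.

Definition hamiltonian_path (T : finType) (e : rel T) (p : seq T) : Prop :=
  [/\ uniq p, (forall x : T, x \in p) & sorted e p].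

Definition pos (T : finType) (p : seq T) (x : T) : nat := index x p.

Definition jump (T : finType) (e : rel T) (p : seq T) (x y : T) : bool :=
  e x y && ((pos p x + 1 < pos p y) || (pos p y + 1 < pos p x)).

Definition secant (T : finType) (e : rel T) (p : seq T) (a b c d : T) : bool :=
  let l := minn (pos p a) (pos p b) in
  let m := maxn (pos p a) (pos p b) in
  let p' := minn (pos p c) (pos p d) in
  let q := maxn (pos p c) (pos p d) in
  [&& jump e p a b, jump e p c d &
      ((l < p' < m) && (m < q)) || ((p' < l < q) && (q < m))].

Definition no_secant_edges (T : finType) (e : rel T) (p : seq T) : Prop :=
  forall a b c d : T, ~~ secant e p a b c d.

(* Proper k-colouring; chi(G) <= k iff such a colouring exists. *)
Definition proper_coloring (T : finType) (e : rel T) (k : nat)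
  (f : T -> 'I_k) : Prop :=
  forall x y : T, e x y -> f x != f y.

Definition colorable (T : finType) (e : rel T) (k : nat) : Prop :=
  exists f : T -> 'I_k, proper_coloring e f.

(* Main.v *)
Require Import Defs.
From mathcomp Require Import all_boot.
From mathcomp Require Import zify.

Set Implicit Arguments. Unset Strict Implicit. Unset Printing Implicit Defensive.

Lemma col_interval (E : nat -> nat -> bool) (n : nat)
  (nc : forall i k j l, i < k -> k < j -> j < l -> l < n -> E i j -> E k l -> False) :
  forall d lo a b, lo + d + 1 < n -> a < 3 -> b < 3 -> a != b ->
  exists c : nat -> nat, [/\ c lo = a, c (lo + d + 1) = b, (forall x, c x < 3) &
    forall u v, lo <= u -> u < v -> v <= lo + d + 1 -> E u v -> c u != c v].
Proof.
elim/ltn_ind => d IH lo a b hn ha hb hab.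
case: d IH hn => [|d] IH hn.
  exists (fun x => if x <= lo then a else b); split => //.
  - by rewrite leqnn.
  - by rewrite ifF //; lia.
  - by move=> x; case: ifP.
  move=> u v h1 h2 h3 _; rewrite ifT; last lia.
  by rewrite ifF //; lia.
set hi := lo + d.+1 + 1.
pose P := fun i => (i < hi) && ((i == lo + 1) || E lo i).
have exP : exists i, P i by exists (lo + 1); rewrite /P eqxx /hi; lia.
have bnd : forall i, P i -> i <= hi by move=> i /andP [] /ltnW.
case: (ex_maxnP exP bnd) => k /andP [khi kE] kmax.
have klo : lo < k.
  have : P (lo + 1) by rewrite /P eqxx /hi; lia.
  by move/kmax; lia.
set ck := 3 - a - b.
have hck : ck < 3 by rewrite /ck; lia.
have hcka : ck != a by rewrite /ck; move: ha hb hab; clear; lia.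
have hckb : ck != b by rewrite /ck; move: ha hb hab; clear; lia.
have [c1 [c1lo c1k c1r c1p]] := IH (k - lo - 1) ltac:(lia) lo a ck ltac:(lia) ha hck
   ltac:(by rewrite eq_sym).
have [c2 [c2lo c2k c2r c2p]] := IH (hi - k - 1) ltac:(lia) k ck b ltac:(lia) hck hb hckb.
have e1 : lo + (k - lo - 1) + 1 = k by lia.
have e2 : k + (hi - k - 1) + 1 = hi by lia.
rewrite e1 in c1k c1p; rewrite e2 in c2k c2p.
exists (fun x => if x <= k then c1 x else c2 x); split.
- by rewrite ifT //; lia.
- by rewrite ifF -/hi //; lia.
- by move=> x; case: ifP.
move=> u v h1 h2 h3 huv.
case: (leqP v k) => hvk.
  by rewrite ifT ?ifT //; try lia; apply: c1p.
case: (leqP k u) => hku.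
  case: (ltngtP u k) => [hh|hh|euk]; first lia.
  - by apply: c2p => //; lia.
  - by subst u; rewrite c1k -c2lo; apply: c2p => //; lia.
have [[elo ehi]|H] : u = lo /\ v = hi \/ ~ (u = lo /\ v = hi).
  by case: (eqVneq u lo) => ?; case: (eqVneq v hi) => ?; [left|right..]; lia.
  rewrite ifT ?ifF; try lia.
  by rewrite elo ehi c1lo c2k.
exfalso.
case: (ltngtP lo u) => [hlu||elu]; last first.
- subst u.
  case: (ltngtP v hi) => [hvhi||evhi]; last first.
  + by apply: H; split.
  + lia.
  + have : P v by rewrite /P hvhi huv orbT.
    by move/kmax; lia.
- lia.
- case/orP: kE => [/eqP ek|ek]; first lia.
  by apply: (nc lo u k v) => //; lia.
Qed.

Theorem proposition3 (T : finType) (e : rel T) (p : seq T) :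
  simple_graph e -> hamiltonian_path e p -> no_secant_edges e p ->
  colorable e 3.
Proof.
move=> [esym eirr] [up allp _] nsec.
case: p up allp nsec => [|x0 p'] up allp nsec.
  by exists (fun _ => ord0) => x; have := allp x.
set p := x0 :: p' in up allp nsec *.
set n := size p.
pose E := fun u v => e (nth x0 p u) (nth x0 p v).
have posn : forall i, i < n -> pos p (nth x0 p i) = i.
  by move=> i hi; rewrite /pos index_uniq.
have nc : forall i k j l, i < k -> k < j -> j < l -> l < n -> E i j -> E k l -> False.
  move=> i k j l h1 h2 h3 h4 Eij Ekl.
  have := nsec (nth x0 p i) (nth x0 p j) (nth x0 p k) (nth x0 p l).
  rewrite /secant /jump !posn; try lia.
  rewrite /E in Eij Ekl; rewrite Eij Ekl /=.
  have -> : minn i j = i by lia.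
  have -> : maxn i j = j by lia.
  have -> : minn k l = k by lia.
  have -> : maxn k l = l by lia.
  have -> : i + 1 < j by lia.
  have -> : k + 1 < l by lia.
  have -> : i < k < j by lia.
  by rewrite h3.
have col : exists c : nat -> nat, (forall x, c x < 3) /\
    forall u v, u < v -> v < n -> E u v -> c u != c v.
  clear posn; case: n nc => [|[|m]] nc.
  - by exists (fun _ => 0); split => // u v; lia.
  - by exists (fun _ => 0); split => // u v; lia.
  have [c [_ _ cr cp]] := @col_interval E m.+2 nc m 0 0 1 ltac:(lia) isT isT isT.
  exists c; split => // u v h1 h2; apply: cp; lia.
case: col => c [cr cp].
exists (fun x => Ordinal (cr (index x p))) => x y exy.
rewrite -val_eqE /=.
have hx : index x p < n by rewrite index_mem.
have hy : index y p < n by rewrite index_mem.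
case: (ltngtP (index x p) (index y p)) => h.
- by apply: cp => //; rewrite /E !nth_index.
- by rewrite eq_sym; apply: cp => //; rewrite /E !nth_index // esym.
- have : x = y by rewrite -(nth_index x0 (allp x)) h nth_index.
  by move=> exy'; rewrite exy' eirr in exy.
Qed.
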